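(* Let $q\in\mathbb{C}\setminus\{0\}$, fix a square root $q^{1/2}$, and let $H$ be the Hopf algebra generated by $X,g,g^{-1}$ with relations $gX=qXg$, $gg^{-1}=g^{-1}g=1$, coproduct $\Delta g=g\otimes g$, $\Delta X=X\otimes g^{-1}+g\otimes X$, counit $\epsilon(g)=1,\epsilon(X)=0$ (the elements $g^kX^m$, $k\in\mathbb{Z}$, $m\in\mathbb{Z}_{\ge0}$, form a basis). Define the linear functional $D_q:H\to\mathbb{C}$ by $D_q(g^kX^m)=\delta_{m,1}q^{k/2}$. Then for every $n\ge1$, $k\in\mathbb{Z}$, $m\ge 0$, the $n$-fold convolution power $D_q^n=D_q^{\otimes n}\circ\Delta^{n-1}$ satisfies \[D_q^n(g^kX^m)=\delta_{n,m}\,[[m]]_q!\;q^{km/2},\] where $[[m]]_q=q^{m-1}+q^{m-3}+\cdots+q^{1-m}$ and $[[m]]_q!=[[1]]_q[[2]]_q\cdots[[m]]_q$. Equivalently, for all $i,j\in\mathbb{Z}$, $D_q^n(g^iX^mg^j)=\delta_{n,m}[[m]]_q!\,q^{(i-j)m/2}$.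
   Context: $\Delta^{n-1}:H\to H^{\otimes n}$ denotes the iterated coproduct ($\Delta^0=\mathrm{id}$). *)

(* Defs.v *)
From mathcomp Require Import all_boot all_order all_algebra.
From mathcomp Require Import complex.
From mathcomp Require Import Rstruct.
From Stdlib Require Rdefinitions.

Set Implicit Arguments.
Unset Strict Implicit.
Unset Printing Implicit Defensive.

Import Order.TTheory GRing.Theory Num.Theory.
Local Open Scope ring_scope.

Notation CC := (complex Rdefinitions.R).

(* PBW basis of H: the pair (k, m) stands for g^k X^m (k : int, m : nat). *)
Definition basisH := (int * nat)%type.

(* Formal finite linear combinations of basis elements of H, resp. of
   pure tensors of basis elements of H^{(x) n} (a pure basis tensor is the
   list [b_1; ...; b_n]). Everything below is linear, so these formal sums
   faithfully represent elements of H and H^{(x) n}. *)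
Definition Helt := seq (CC * basisH).
Definition tensor := seq (CC * seq basisH).

(* Product of basis elements, using g X = q X g, i.e. X^b g^c = q^{-bc} g^c X^b:
   (g^a X^b)(g^c X^d) = q^{-bc} g^{a+c} X^{b+d}. *)
Definition bmul (q : CC) (x y : basisH) : CC * basisH :=
  (q ^ (- ((x.2)%:Z * y.1)), (x.1 + y.1, (x.2 + y.2)%N)).

Definition hmul (q : CC) (x y : Helt) : Helt :=
  [seq (let r := bmul q p.2 p'.2 in (p.1 * p'.1 * r.1, r.2)) | p <- x, p' <- y].

Definition gX (k : int) (m : nat) : Helt := [:: (1, (k, m))].

Fixpoint wmul (q : CC) (u v : seq basisH) : CC * seq basisH :=
  match u, v with
  | a :: u', b :: v' =>
      let w := wmul q u' v' in
      let ab := bmul q a b in (ab.1 * w.1, ab.2 :: w.2)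
  | _, _ => (1, [::])
  end.

Definition tmul (q : CC) (x y : tensor) : tensor :=
  [seq (let w := wmul q p.2 r.2 in (p.1 * r.1 * w.1, w.2)) | p <- x, r <- y].

(* Delta X = X (x) g^{-1} + g (x) X ;  1 (x) 1 *)
Definition DeltaX : tensor :=
  [:: (1, [:: (0%:Z, 1%N); ((-1 : int), 0%N)]); (1, [:: (1%:Z, 0%N); (0%:Z, 1%N)])].
Definition one2 : tensor := [:: (1, [:: (0%:Z, 0%N); (0%:Z, 0%N)])].

(* The coproduct is the algebra map with Delta g = g (x) g (hence
   Delta g^k = g^k (x) g^k for k in Z) and Delta X as above, so
   Delta (g^k X^m) = (g^k (x) g^k) (Delta X)^m. *)
Definition Delta (q : CC) (b : basisH) : tensor :=
  tmul q [:: (1, [:: (b.1, 0%N); (b.1, 0%N)])] (iter b.2 (tmul q DeltaX) one2).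

Definition DeltaFirst (q : CC) (t : CC * seq basisH) : tensor :=
  match t.2 with
  | b :: bs => [seq (t.1 * p.1, p.2 ++ bs) | p <- Delta q b]
  | [::] => [::]
  end.

(* iterated coproduct Delta^j : H -> H^{(x) (j+1)}, Delta^0 = id,
   Delta^{j+1} = (Delta (x) id^{(x) j}) o Delta^j, on basis elements *)
Fixpoint iterDelta (q : CC) (j : nat) (b : basisH) : tensor :=
  match j with
  | 0 => [:: (1, [:: b])]
  | j'.+1 => flatten [seq DeltaFirst q t | t <- iterDelta q j' b]
  end.

(* D_q(g^k X^m) = delta_{m,1} q^{k/2}, with s a fixed square root of q *)
Definition Dq (s : CC) (b : basisH) : CC := if b.2 == 1%N then s ^ b.1 else 0.

Definition DqTensor (s : CC) (t : CC * seq basisH) : CC :=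
  t.1 * \prod_(b <- t.2) Dq s b.

(* n-fold convolution power D_q^n = D_q^{(x) n} o Delta^{n-1} (n >= 1),
   extended linearly to H *)
Definition convPow (q s : CC) (n : nat) (x : Helt) : CC :=
  \sum_(p <- x) p.1 * \sum_(t <- iterDelta q n.-1 p.2) DqTensor s t.

Definition qint (q : CC) (m : nat) : CC :=
  \sum_(i < m) q ^ (m%:Z - 1 - 2 * (i : nat)%:Z).

Definition qfact (q : CC) (m : nat) : CC := \prod_(i < m) qint q i.+1.

(* Main.v *)
Require Import Defs.
From mathcomp Require Import all_boot all_order all_algebra.
From mathcomp Require Import complex.
From mathcomp Require Import Rstruct.
From mathcomp Require Import zify ring.
Import GRing.Theory Num.Theory.
Local Open Scope ring_scope.

Section S.
Variable q : CC.
Hypothesis hq : q != 0.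

Definition ev (f : seq basisH -> CC) (T : tensor) : CC := \sum_(p <- T) p.1 * f p.2.

Lemma ev_cat f T1 T2 : ev f (T1 ++ T2) = ev f T1 + ev f T2.
Proof. by rewrite /ev big_cat. Qed.

Lemma ev_tmul1 f c u T :
  ev f (tmul q [:: (c, u)] T) = ev (fun v => c * (wmul q u v).1 * f (wmul q u v).2) T.
Proof.
rewrite /ev /tmul /= cats0 big_map; apply: eq_bigr => r _ /=; ring.
Qed.

Lemma ev_tmul_cons f a x T :
  ev f (tmul q (a :: x) T) = ev f (tmul q [:: a] T) + ev f (tmul q x T).
Proof. by rewrite /tmul /= cats0 ev_cat. Qed.

Lemma ev_ext f g T : {in T, forall p, f p.2 = g p.2} -> ev f T = ev g T.
Proof. move=> H; rewrite /ev big_seq_cond [RHS]big_seq_cond; apply: eq_bigr => p /andP[pT _]; by rewrite H. Qed.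

Lemma ev_scale c f T : ev (fun v => c * f v) T = c * ev f T.
Proof. rewrite /ev mulr_sumr; apply: eq_bigr => p _; ring. Qed.

Lemma size_wmul u v : size (wmul q u v).2 = minn (size u) (size v).
Proof. elim: u v => [|a u IH] [|b v] //=; by rewrite IH minnSS. Qed.

Definition sz2 (T : tensor) := all (fun p => size p.2 == 2)%N T.

Lemma sz2_tmul x y : sz2 x -> sz2 y -> sz2 (tmul q x y).
Proof.
move=> /allP Hx /allP Hy; apply/allP => p /allpairsP [[a b] [/= aX bY ->]] /=.
by rewrite size_wmul (eqP (Hx _ aX)) (eqP (Hy _ bY)).
Qed.

Definition Tm m := iter m (tmul q DeltaX) one2.

Lemma sz2_Tm m : sz2 (Tm m).
Proof. elim: m => [|m IH] //=; exact: sz2_tmul. Qed.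

Lemma sz2_Delta b : sz2 (Delta q b).
Proof. apply: sz2_tmul => //; exact: sz2_Tm. Qed.
Definition P (N J : nat) (x y : CC) (v : seq basisH) : CC :=
  match v with
  | [:: (a0, b0); (a1, b1)] => (b0 == N)%:R * (b1 == J)%:R * x ^ a0 * y ^ a1
  | _ => 0
  end.

Definition E N J x y m := ev (P N J x y) (Tm m).

Lemma E0 N J x y : E N J x y 0 = (N == 0%N)%:R * (J == 0%N)%:R.
Proof. by rewrite /E /ev /= big_cons big_nil /= !mulr1 mul1r addr0 !(eq_sym 0%N). Qed.

Lemma ES N J x y m : x != 0 -> y != 0 ->
  E N J x y m.+1 = (if N is N'.+1 then y^-1 * E N' J (x / q) y m else 0)
                 + (if J is J'.+1 then x * E N J' x (y / q) m else 0).
Proof.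
move=> x0 y0.
rewrite /E /Tm iterS -/(Tm m) /DeltaX ev_tmul_cons !ev_tmul1.
congr (_ + _).
- case: N => [|N].
    rewrite (@ev_ext _ (fun _ => 0)); first by rewrite /ev big1 // => p _; rewrite mulr0.
    move=> p /(allP (sz2_Tm m)); case: p => c [|[a0 b0] [|[a1 b1] [|? ?]]] //= _.
    by rewrite !mul0r mulr0.
  rewrite -ev_scale; apply: ev_ext => p /(allP (sz2_Tm m)).
  case: p => c [|[a0 b0] [|[a1 b1] [|? ?]]] //= _.
  rewrite add0r eqSS add0n expfzMl exprz_inv -addrC expfzDr // mul1r.
  set e1 := (_ == _)%:R; set e2 := (_ == _)%:R.
  rewrite mul0r oppr0 expr0z mul1r exprN1.
  ring.
- case: J => [|J].
    rewrite (@ev_ext _ (fun _ => 0)); first by rewrite /ev big1 // => p _; rewrite mulr0.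
    move=> p /(allP (sz2_Tm m)); case: p => c [|[a0 b0] [|[a1 b1] [|? ?]]] //= _.
    by rewrite mulr0 !mul0r mulr0.
  rewrite -ev_scale; apply: ev_ext => p /(allP (sz2_Tm m)).
  case: p => c [|[a0 b0] [|[a1 b1] [|? ?]]] //= _.
  rewrite add0r eqSS add0n expfzMl exprz_inv expfzDr // !mul1r mul0r oppr0 expr0z expr1z.
  ring.
Qed.
Lemma EJ0 m : forall N x y, x != 0 -> y != 0 ->
  E N 0 x y m = (N == m)%:R * y ^ (- m%:Z).
Proof.
elim: m => [|m IH] N x y x0 y0.
  by rewrite E0 mulr1.
rewrite ES // addr0; case: N => [|N].
  by rewrite mul0r.
rewrite IH ?mulf_neq0 ?invr_neq0 // eqSS.
rewrite -exprN1 mulrCA -expfzDr //; congr (_ * y ^ _); lia.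
Qed.

Lemma qintS m : qint q m.+1 = q ^ m%:Z + q^-1 * qint q m.
Proof.
rewrite /qint big_ord_recl /=; congr (_ + _).
  by congr (q ^ _); lia.
rewrite mulr_sumr; apply: eq_bigr => i _ /=.
rewrite -exprN1 -expfzDr //; congr (q ^ _); rewrite /bump /=; lia.
Qed.

Lemma qint0 : qint q 0 = 0.
Proof. by rewrite /qint big_ord0. Qed.

Lemma EJ1 m : forall N x y, x != 0 -> y != 0 ->
  E N 1 x y m = (N.+1 == m)%:R * x * y ^ (1 - m%:Z) * qint q m.
Proof.
elim: m => [|m IH] N x y x0 y0.
  by rewrite E0 mulr0 mul0r !mul0r.
have yq : y / q != 0 by rewrite mulf_neq0 ?invr_neq0.
rewrite ES // EJ0 // eqSS.
have ->: (if N is N'.+1 then y^-1 * E N' 1 (x / q) y m else 0)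
   = (N == m)%:R * (y^-1 * ((x / q) * y ^ (1 - m%:Z) * qint q m)).
  case: N => [|N].
    case: m {IH} => [|m]; first by rewrite qint0 !mulr0.
    by rewrite mul0r.
  rewrite IH ?(mulf_neq0 x0 (invr_neq0 hq)) //; ring.
case: eqP => _; last by rewrite !mul0r mulr0 addr0.
rewrite qintS expfzMl exprz_inv opprK expfzDr //.
rewrite -exprN1 mulrCA -expfzDr //.
have e1 : y ^ (1 - m%:Z) = y * y ^ (- m%:Z) by rewrite expfzDr.
have e2 : y ^ (1 - m.+1%:Z) = y ^ (- m%:Z) by congr (y ^ _); lia.
rewrite e1 e2 exprN1; field.
by rewrite hq y0.
Qed.
Lemma evP_Delta N J x y k m : x != 0 -> y != 0 ->
  ev (P N J x y) (Delta q (k, m)) = x ^ k * y ^ k * E N J x y m.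
Proof.
move=> x0 y0; rewrite /Delta ev_tmul1 /E -ev_scale; apply: ev_ext => p /(allP (sz2_Tm m)).
case: p => c [|[a0 b0] [|[a1 b1] [|? ?]]] //= _.
rewrite !mul0r oppr0 expr0z !add0n !expfzDr //; ring.
Qed.

Variable s : CC.

Definition Dq2 (phi : basisH -> CC) (v : seq basisH) : CC :=
  match v with [:: u0; u1] => phi u0 * Dq s u1 | _ => 0 end.

Definition Rop (phi : basisH -> CC) (b : basisH) : CC := ev (Dq2 phi) (Delta q b).

Definition Sj j (phi : basisH -> CC) b : CC :=
  \sum_(t <- iterDelta q j b) t.1 *
     (match t.2 with u :: us => phi u * \prod_(w <- us) Dq s w | [::] => 0 end).

Lemma size_iterDelta j b : all (fun t => size t.2 == j.+1)%N (iterDelta q j b).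
Proof.
elim: j => [|j IH] //=.
apply/allP => t /flatten_mapP [t0 /(allP IH)].
case: t0 => c [|u us] //= /eqP [] Hs /mapP [p /(allP (sz2_Delta u)) /eqP Hp ->] /=.
by rewrite size_cat Hp Hs.
Qed.

Lemma Sj_S j phi b : Sj j.+1 phi b = Sj j (Rop phi) b.
Proof.
rewrite /Sj /= big_flatten /= big_map big_seq [RHS]big_seq; apply: eq_bigr => t /(allP (size_iterDelta j b)).
case: t => c [|u us] //= _.
rewrite big_map /Rop /ev mulr_suml mulr_sumr big_seq [RHS]big_seq; apply: eq_bigr => p /(allP (sz2_Delta u)).
case: p => d [|u0 [|u1 [|? ?]]] //= _.
rewrite big_cons; ring.
Qed.

Lemma Sj_iter j : forall phi b, Sj j phi b = iter j Rop phi b.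
Proof.
elim: j => [|j IH] phi b.
  by rewrite /Sj /= big_cons big_nil /= big_nil mul1r mulr1 addr0.
by rewrite Sj_S IH iterSr.
Qed.
Hypothesis hs : s ^+ 2 = q.

Lemma s0 : s != 0.
Proof. apply/eqP => H; move/eqP: hq; by rewrite -hs H expr0n. Qed.

Lemma qfactS n : qfact q n.+1 = qfact q n * qint q n.+1.
Proof. by rewrite /qfact big_ord_recr. Qed.

Lemma iterR j : forall b, iter j Rop (Dq s) b
   = (b.2 == j.+1)%:R * qfact q j.+1 * s ^ (b.1 * j.+1%:Z).
Proof.
have sn0 := s0.
elim: j => [|j IH] [k m].
  rewrite /= /Dq /= /qfact big_ord1 /qint big_ord1 /=.
  case: (m == 1%N); last by rewrite !mul0r.
  by rewrite mulr1 mul1r mulr1.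
rewrite iterS /Rop.
set n := j.+1.
rewrite (@ev_ext _ (fun v => qfact q n * P n 1 (s ^ n%:Z) s v)); last first.
  case=> c [|[a0 b0] [|[a1 b1] [|? ?]]] _ //=; rewrite ?mulr0 //.
  rewrite IH /Dq /= exprz_exp.
  case: (b1 == 1%N); last by rewrite !(mulr0, mul0r, mulr0n).
  rewrite (mulrC a0) mulr1n; ring.
rewrite ev_scale evP_Delta ?expfz_neq0 // EJ1 ?expfz_neq0 //=.
rewrite (eq_sym m).
case: eqP => [<-|_]; last by rewrite !mul0r !mulr0.
rewrite qfactS.
have e1 : s ^ (n%:Z) * s ^ (1 - n.+1%:Z) = 1.
  by rewrite -expfzDr //; have -> : n%:Z + (1 - n.+1%:Z) = 0 by lia.
have e2 : s ^ (k * n.+1%:Z) = (s ^ n%:Z) ^ k * s ^ k.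
  by rewrite exprz_exp -expfzDr //; congr (s ^ _); nia.
rewrite e2 !mulr1n !mul1r e1; ring.
Qed.
End S.

Lemma convPow1 q s n c b : convPow q s n [:: (c, b)] = c * Sj q s n.-1 (Dq s) b.
Proof.
rewrite /convPow big_cons big_nil addr0 /=; congr (_ * _).
rewrite /Sj big_seq [RHS]big_seq; apply: eq_bigr => t /(allP (size_iterDelta q n.-1 b)).
case: t => d [|u us] //= _.
by rewrite /DqTensor big_cons.
Qed.

Theorem mainTheorem2 (q s : CC) (hq : q != 0) (hs : s ^+ 2 = q) :
  forall (n : nat), (1 <= n)%N ->
  (forall (k : int) (m : nat),
     convPow q s n (gX k m) = (n == m)%:R * qfact q m * s ^ (k * m%:Z)) /\
  (forall (i j : int) (m : nat),
     convPow q s n (hmul q (hmul q (gX i 0) (gX 0 m)) (gX j 0))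
       = (n == m)%:R * qfact q m * s ^ ((i - j) * m%:Z)).
Proof.
move=> n n1.
have part1 : forall (k : int) (m : nat),
     convPow q s n (gX k m) = (n == m)%:R * qfact q m * s ^ (k * m%:Z).
  move=> k m; rewrite /gX convPow1 mul1r Sj_iter iterR // /= prednK //.
  rewrite (eq_sym m); case: eqP => [->//|_]; by rewrite !mul0r.
split => // i j m.
have -> : hmul q (hmul q (gX i 0) (gX 0 m)) (gX j 0)
   = [:: (q ^ (- (m%:Z * j)), (i + j, m))].
  rewrite /hmul /gX /bmul /=.
  by rewrite !mul0r oppr0 expr0z !mul1r addr0 add0n addn0.
rewrite convPow1 -(mul1r (Sj _ _ _ _ _)) -convPow1 part1.
have s0 : s != 0 by apply/eqP => H; move/eqP: hq; rewrite -hs H expr0n.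
rewrite -{1}hs exprnP exprz_exp mulrCA -expfzDr //; congr (_ * _ * s ^ _).
ring.
Qed.
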